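(* The canonical collection $\mathcal{S}$ consists of actively connected vertex sets and satisfies: (i) for every $S\in\mathcal{S}$, the tree $T_S$ connects the vertices in $S$; (ii) $\mathcal{S}$ is agreeable with respect to $y$.
   Context: Steiner Forest: finite undirected graph $G=(V,E)$ with non-negative edge costs $(c_e)_{e\in E}$ and a set $\mathcal{D}$ of demand pairs $\{a,b\}\subseteq V$ (partners); feasible solutions are $F\subseteq E$ with each demand pair in one connected component of $(V,F)$, of cost $c(F)=\sum_{e\in F}c_e$. $\mathrm{OPT}$ is a fixed optimal solution that is inclusionwise minimal (no cost-$0$ edge can be omitted keeping feasibility). For $U\subseteq V$, $\delta(U)$ is the set of edges with exactly one endpoint in $U$; $U$ separates $S$ if $S\cap U\ne\emptyset$ and $S\setminus U\ne\emptyset$. The $\varepsilon$-extended moat-growing algorithm (fixed $\varepsilon\ge0$): time $t$ increases continuously from $0$ at unit rate; it maintains tight edges $F$ (initially empty), duals $y_S(t)\ge0$ (initially $0$), and budgets of components (initially $0$). $\mathcal{C}^t$ is the family of vertex sets of connected components of $(V,F)$. A component is demand-active if it contains a vertex not connected in $(V,F)$ to some partner; budget-active if not demand-active but with positive budget; active if either; $\mathcal{A}^t$ is the set of active components. Each $y_S$, $S\in\mathcal{A}^t$, grows at unit rate; budgets of demand-active components grow at rate $\varepsilon$ and of budget-active ones decrease at rate $1$; an edge $e$ with $\sum_{S:e\in\delta(S)}y_S(t)=c_e$ becomes tight and is added to $F$; merging components add budgets. $y_S=y_S(\infty)$; $\mathcal{U}_{\mathrm{sep}}$ is the set of $U\in\mathrm{supp}(y)$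 separating some demand pair. The deactivation time $\tau_v$ of $v$ is the largest $t$ such that for all $s<t$, $v$ lies in a set of $\mathcal{A}^s$. Vertices $u,v$ are actively connected if for some $t$ they lie in a common set of $\mathcal{C}^t$ and $\tau_u,\tau_v\ge t$; this is an equivalence relation and a set is actively connected if contained in one equivalence class. A demand pair $\{a,b\}$ is satisfied by a vertex set $S$ if $\{a,b\}\subseteq S$, and by a collection if by some member. A collection $\mathcal{S}$ of vertex sets is agreeable (w.r.t. $y$) if (A1) every $S\in\mathcal{S}$ is a subset of the vertex set of some connected component of $\mathrm{OPT}$, with at most one $S\in\mathcal{S}$ per connected component of $\mathrm{OPT}$, and (A2) whenever two demand pairs are both separated by some $U\in\mathrm{supp}(y)$, either both or none of them are satisfied by $\mathcal{S}$. Canonical collection: start with a family $\mathcal{F}$ in which each tree (connected component) of $\mathrm{OPT}$ is its own forest; for each $U\in\mathcal{U}_{\mathrm{sep}}$, merge (take the union of vertex and edge sets of) all forests of $\mathcal{F}$ that connect some demand pair separated by $U$ into a single forest. For each $F\in\mathcal{F}$ let $r_F$ be a vertex of $F$ with maximum deactivation time; for each connected component $T$ of $F$, let $S$ be the set of vertices of $T$ actively connected to $r_F$; if $S\ne\emptyset$, add $S$ to $\mathcal{S}$ and let $T_S$ be the minimal subtree of $T$ connecting $S$. *)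

(* Defs.v *)
From HB Require Import structures.
From mathcomp Require Import all_boot all_order all_algebra.
From mathcomp Require Import reals.
Set Implicit Arguments. Unset Strict Implicit. Unset Printing Implicit Defensive.
Import Order.TTheory GRing.Theory Num.Theory.
Local Open Scope ring_scope.

(* A run of the eps-extended moat-growing algorithm, discretised into phases
   k = 0..n.  Phase k starts at time [ts k]; [Fs k] is the set of tight edges,
   [bs k S] the budget of component S and [ys k S] the dual y_S, all at the
   start of phase k (i.e. after all events happening at time [ts k] that are
   processed before phase k).  Phases of length 0 are allowed (several events
   at the same time, e.g. several edges becoming tight simultaneously are
   added one at a time). *)
Record run (V E : finType) (R : realType) := Run {
  nph : nat;
  ts  : nat -> R;
  Fs  : nat -> {set E};
  bs  : nat -> {set V} -> R;
  ys  : nat -> {set V} -> R }.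

Section SteinerForest.
Variables (R : realType) (V E : finType) (src tgt : E -> V).
Variables (c : E -> R) (D : {set {set V}}) (eps : R).

Definition adj (F : {set E}) : rel V := fun u v =>
  [exists e in F, ((src e == u) && (tgt e == v)) || ((src e == v) && (tgt e == u))].
Definition comp (F : {set E}) (v : V) : {set V} := [set u | connect (adj F) v u].
Definition comps (F : {set E}) : {set {set V}} := [set comp F v | v : V].

Definition separates (U S : {set V}) : bool := (S :&: U != set0) && (S :\: U != set0).
Definition in_cut (U : {set V}) (e : E) : bool := (src e \in U) != (tgt e \in U).
Definition load (y : {set V} -> R) (e : E) : R := \sum_(U : {set V} | in_cut U e) y U.
Definition tight (y : {set V} -> R) (e : E) : bool := load y e == c e.

Definition feasible (F : {set E}) : Prop :=
  forall d, d \in D -> exists2 T, T \in comps F & d \subset T.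
Definition cost (F : {set E}) : R := \sum_(e in F) c e.
(* OPT: an optimal solution that is inclusionwise minimal *)
Definition minimal_optimal (OPT : {set E}) : Prop :=
  [/\ feasible OPT,
      (forall F, feasible F -> cost OPT <= cost F) &
      (forall e, e \in OPT -> c e = 0 -> ~ feasible (OPT :\ e))].

Definition demand_active (F : {set E}) (S : {set V}) : bool :=
  (S \in comps F) &&
  [exists v in S, exists u, ([set u; v] \in D) && ~~ connect (adj F) v u].
Definition budget_active (F : {set E}) (b : {set V} -> R) (S : {set V}) : bool :=
  (S \in comps F) && ~~ demand_active F S && (0 < b S).
Definition active (F : {set E}) (b : {set V} -> R) (S : {set V}) : bool :=
  demand_active F S || budget_active F b S.

Definition bud_end (F : {set E}) (b : {set V} -> R) (dt : R) (S : {set V}) : R :=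
  b S + (if demand_active F S then eps * dt
         else if budget_active F b S then - dt else 0).

Definition is_run (r : run V E R) : Prop :=
  let n := nph r in let t := ts r in let F := Fs r in
  let b := bs r in let y := ys r in
  [/\
      t 0%N = 0 /\ F 0%N = set0 /\ (forall S, b 0%N S = 0) /\ (forall S, y 0%N S = 0),
      (forall k, (k < n)%N ->
         let dt := t k.+1 - t k in
         0 <= dt /\
             (forall S, y k.+1 S = y k S + (if active (F k) (b k) S then dt else 0)) /\
             (forall e, load (y k.+1) e <= c e) /\
             (0 < dt -> forall e, tight (y k) e -> e \in F k) /\
             (F k.+1 = F k \/ exists2 e, e \notin F k & tight (y k.+1) e /\ F k.+1 = e |: F k) /\
             (forall S, S \in comps (F k) -> 0 <= bud_end (F k) (b k) dt S) /\
             (forall S, b k.+1 S =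
                \sum_(S' in comps (F k) | S' \subset S) bud_end (F k) (b k) dt S')),
      (forall S, ~~ active (F n) (b n) S) &
      (forall e, tight (y n) e -> e \in F n)].

(* phase k is the state of the algorithm at time s (the last phase starting
   at or before s) *)
Definition phase_at (r : run V E R) (s : R) (k : nat) : Prop :=
  [/\ (k <= nph r)%N, ts r k <= s & (k = nph r \/ s < ts r k.+1)].

Definition active_at (r : run V E R) (s : R) (v : V) : Prop :=
  exists k, phase_at r s k /\
    exists2 S, active (Fs r k) (bs r k) S & v \in S.

Definition deact_time (r : run V E R) (v : V) : R :=
  reals.sup (fun t : R => forall s, 0 <= s -> s < t -> active_at r s v).

Definition act_conn (r : run V E R) (u v : V) : Prop :=
  exists t : R, [/\ 0 <= t,
    (exists k, phase_at r t k /\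
       exists2 S, S \in comps (Fs r k) & (u \in S) && (v \in S)),
    t <= deact_time r u & t <= deact_time r v].

Definition act_conn_set (r : run V E R) (S : {set V}) : Prop :=
  exists x, forall u, u \in S -> act_conn r x u.

Definition yfin (r : run V E R) : {set V} -> R := ys r (nph r).

Definition Usep (y : {set V} -> R) : {set {set V}} :=
  [set U | (0 < y U) && [exists d in D, separates U d]].

(* canonical collection: forests are represented by their vertex sets (unions
   of trees of OPT); the trees of a forest W are the components of OPT
   contained in W *)
Definition connects_pair_sep (OPT : {set E}) (U W : {set V}) : bool :=
  [exists d in D, separates U d &&
     [exists T in comps OPT, (T \subset W) && (d \subset T)]].

Definition merge_step (OPT : {set E}) (P : {set {set V}}) (U : {set V}) : {set {set V}} :=
  if [exists W in P, connects_pair_sep OPT U W] then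
    [set W in P | ~~ connects_pair_sep OPT U W] :|:
    [set \bigcup_(W in P | connects_pair_sep OPT U W) W]
  else P.

Definition forest_family (OPT : {set E}) (y : {set V} -> R) : {set {set V}} :=
  foldl (merge_step OPT) (comps OPT) (enum (Usep y)).

Definition root_choice (r : run V E R) (OPT : {set E}) (rt : {set V} -> V) : Prop :=
  forall W, W \in forest_family OPT (yfin r) ->
    rt W \in W /\ forall u, u \in W -> deact_time r u <= deact_time r (rt W).

Definition in_canonical (r : run V E R) (OPT : {set E}) (rt : {set V} -> V)
    (S : {set V}) : Prop :=
  exists2 W, W \in forest_family OPT (yfin r) &
  exists2 T, (T \in comps OPT) && (T \subset W) &
    (forall v, v \in S <-> (v \in T /\ act_conn r (rt W) v)) /\ S != set0.

Definition connects (X : {set E}) (S : {set V}) : Prop :=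
  forall u v, u \in S -> v \in S -> connect (adj X) u v.
Definition endpoints (X : {set E}) : {set V} := [set src e | e in X] :|: [set tgt e | e in X].
Definition is_subtree (OPT : {set E}) (T : {set V}) (X : {set E}) : Prop :=
  [/\ (forall e, e \in X -> (e \in OPT) && (src e \in T) && (tgt e \in T)),
      connects X (endpoints X) &
      (forall e, e \in X -> ~~ connect (adj (X :\ e)) (src e) (tgt e))].
Definition min_subtree_connecting (OPT : {set E}) (T S : {set V}) (X : {set E}) : Prop :=
  [/\ is_subtree OPT T X, connects X S &
      (forall X' : {set E}, X' \proper X -> ~ (is_subtree OPT T X' /\ connects X' S))].

Definition satisfied (Sc : {set V} -> Prop) (d : {set V}) : Prop :=
  exists2 S, Sc S & d \subset S.
Definition agreeable (OPT : {set E}) (y : {set V} -> R) (Sc : {set V} -> Prop) : Prop :=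
  (forall S, Sc S -> exists2 T, T \in comps OPT & S \subset T) /\
  (forall S S' T, Sc S -> Sc S' -> T \in comps OPT -> S \subset T -> S' \subset T -> S = S') /\
  (forall U d d', 0 < y U -> d \in D -> d' \in D -> separates U d -> separates U d' ->
     (satisfied Sc d <-> satisfied Sc d')).

End SteinerForest.

(* Main.v *)
Require Import Defs.
From HB Require Import structures.
From mathcomp Require Import all_boot all_order all_algebra.
From mathcomp Require Import reals boolp.
From mathcomp Require classical_sets.
Import Order.TTheory GRing.Theory Num.Theory.
Local Open Scope ring_scope.
Set Implicit Arguments. Unset Strict Implicit. Unset Printing Implicit Defensive.

Section Graph.
Variables (V E : finType) (src tgt : E -> V).
Implicit Types (F X : {set E}) (S : {set V}) (u v w : V).

Lemma adj_sym F : symmetric (adj src tgt F).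
Proof.
move=> u v; apply/existsP/existsP => -[e /andP[eF h]]; exists e; rewrite eF /=;
  by rewrite orbC.
Qed.

Lemma conn_sym F u v : connect (adj src tgt F) u v = connect (adj src tgt F) v u.
Proof. exact: (sym_connect_sym (adj_sym F)). Qed.

Lemma conn_trans F u v w : connect (adj src tgt F) u v -> connect (adj src tgt F) v w ->
  connect (adj src tgt F) u w.
Proof. exact: connect_trans. Qed.

Lemma adj_mono F F' u v : F \subset F' -> adj src tgt F u v -> adj src tgt F' u v.
Proof.
move=> sub /existsP[e /andP[eF h]]; apply/existsP; exists e.
by rewrite (subsetP sub _ eF).
Qed.

Lemma conn_mono F F' u v : F \subset F' -> connect (adj src tgt F) u v ->
  connect (adj src tgt F') u v.
Proof.
move=> sub; apply: connect_sub => x y h; apply: connect1; exact: adj_mono sub h.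
Qed.

Lemma in_comp F v u : (u \in Defs.comp src tgt F v) = connect (adj src tgt F) v u.
Proof. by rewrite inE. Qed.

Lemma comp_self F v : v \in Defs.comp src tgt F v.
Proof. by rewrite in_comp connect0. Qed.

Lemma comp_eq F v u : u \in Defs.comp src tgt F v -> Defs.comp src tgt F u = Defs.comp src tgt F v.
Proof.
rewrite in_comp => h; apply/setP => w; rewrite !in_comp; apply/idP/idP => h2.
  exact: conn_trans h h2.
by apply: conn_trans h2; rewrite conn_sym.
Qed.

Lemma comps_eq F S u : S \in comps src tgt F -> u \in S -> S = Defs.comp src tgt F u.
Proof.
move=> /imsetP[v _ ->] uS; by rewrite (comp_eq uS).
Qed.

Lemma comps_meet F S S' u : S \in comps src tgt F -> S' \in comps src tgt F ->
  u \in S -> u \in S' -> S = S'.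
Proof. move=> h h' uS uS'; by rewrite (comps_eq h uS) (comps_eq h' uS'). Qed.

Lemma comps_conn F S u v : S \in comps src tgt F -> u \in S -> v \in S ->
  connect (adj src tgt F) u v.
Proof. move=> h uS vS; by rewrite -in_comp -(comps_eq h uS). Qed.

Lemma comp_in_comps F v : Defs.comp src tgt F v \in comps src tgt F.
Proof. exact: imset_f. Qed.

Lemma conn_remove X e u v :
  connect (adj src tgt (X :\ e)) (src e) (tgt e) ->
  connect (adj src tgt X) u v -> connect (adj src tgt (X :\ e)) u v.
Proof.
move=> he; apply: connect_sub => x y /existsP[f /andP[fX h]].
have [fe|fne] := eqVneq f e.
  subst f; case/orP: h => /andP[/eqP<- /eqP<-] //; by rewrite conn_sym.
apply: connect1; apply/existsP; exists f; by rewrite !inE fne fX.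
Qed.

End Graph.
Section Subtree.
Variables (V E : finType) (src tgt : E -> V).
Implicit Types (F X : {set E}) (S T : {set V}) (u v w : V).

Definition connb X S := [forall u in S, forall v in S, connect (adj src tgt X) u v].

Lemma connbP X S : reflect (connects src tgt X S) (connb X S).
Proof.
apply: (iffP forallP) => [h u v uS vS|h u].
  by have /implyP/(_ uS)/forallP/(_ v)/implyP/(_ vS) := h u.
by apply/implyP => uS; apply/forallP => v; apply/implyP => vS; exact: h.
Qed.

Lemma restrict_path OPT T x p : T \in comps src tgt OPT -> x \in T ->
  path (adj src tgt OPT) x p ->
  connect (adj src tgt [set e in OPT | (src e \in T) && (tgt e \in T)]) x (last x p).
Proof.
move=> hT; elim: p x => [|z p IH] x xT /=; first by rewrite connect0.
case/andP=> hxz hp.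
have zT : z \in T.
  rewrite (comps_eq hT xT) in_comp; exact: connect1.
apply: connect_trans (IH z zT hp); apply: connect1.
case/existsP: hxz => e /andP[eO h]; apply/existsP; exists e; rewrite h andbT inE eO /=.
by case/orP: h => /andP[/eqP-> /eqP->]; rewrite xT zT.
Qed.

Lemma subtree_exists OPT T S : T \in comps src tgt OPT -> S \subset T ->
  exists X, min_subtree_connecting src tgt OPT T S X /\ connects src tgt X S.
Proof.
move=> hT sST.
set X0 := [set e in OPT | (src e \in T) && (tgt e \in T)].
pose P := fun X => [&& X \subset X0, connb X (endpoints src tgt X) & connb X S].
have connT : forall u v, u \in T -> v \in T -> connect (adj src tgt X0) u v.
  move=> u v uT vT.
  have := comps_conn hT uT vT => /connectP[p hp ->]; exact: restrict_path.
have P0 : P X0.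
  apply/and3P; split => //; apply/connbP => u v uS vS.
    apply: connT.
      case/setUP: uS => /imsetP[e]; rewrite inE => /andP[_ /andP[h1 h2]] ->//.
    case/setUP: vS => /imsetP[e]; rewrite inE => /andP[_ /andP[h1 h2]] ->//.
  by apply: connT; apply: (subsetP sST).
have [X /minsetP[/and3P[sX0 cE cS] minX] _] := minset_exists P0.
have stX : is_subtree src tgt OPT T X.
  split.
  - by move=> e eX; move: (subsetP sX0 _ eX); rewrite /X0 inE andbA.
  - exact/connbP.
  - move=> e eX; apply/negP => hc.
    have PX' : P (X :\ e).
      apply/and3P; split.
      + by apply: subset_trans sX0; apply: subD1set.
      + apply/connbP => u v uS vS; apply: conn_remove => //.
        move/connbP: cE; apply.
          move: uS; rewrite /endpoints !inE => /orP[] /imsetP[f]; rewrite inE => /andP[_ fX] ->;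
          apply/orP; [left|right]; exact: imset_f.
        move: vS; rewrite /endpoints !inE => /orP[] /imsetP[f]; rewrite inE => /andP[_ fX] ->;
        apply/orP; [left|right]; exact: imset_f.
      + apply/connbP => u v uS vS; apply: conn_remove => //; exact: (connbP _ _ cS).
    have := minX _ PX' (subD1set X e) => /setP/(_ e); by rewrite !inE eqxx eX.
exists X; split; last exact/connbP.
split => //; first exact/connbP.
move=> X' hprop [st' cS'].
have sub := proper_sub hprop.
have PX' : P X'.
  case: st' => h1 h2 _; apply/and3P; split.
  + by apply/subsetP => e eX'; move: (h1 e eX'); rewrite /X0 inE andbA.
  + exact/connbP.
  + exact/connbP.
have eqX := minX _ PX' sub.
by move: hprop; rewrite eqX properxx.
Qed.
End Subtree.
Section Forest.
Variables (V E : finType) (src tgt : E -> V) (D : {set {set V}}) (OPT : {set E}).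
Implicit Types (P : {set {set V}}) (U W : {set V}).

Definition Inv P := forall W1 W2 x, W1 \in P -> W2 \in P -> x \in W1 -> x \in W2 -> W1 = W2.
Definition Sub P P' := forall W, W \in P -> exists2 W', W' \in P' & W \subset W'.

Notation cps := (connects_pair_sep src tgt D OPT).
Notation mstep := (merge_step src tgt D OPT).

Lemma Sub_trans P1 P2 P3 : Sub P1 P2 -> Sub P2 P3 -> Sub P1 P3.
Proof.
move=> h1 h2 W /h1[W' /h2[W'' h3 s2] s1]; exists W'' => //; exact: subset_trans s1 s2.
Qed.

Lemma merge_inv P U : Inv P -> Inv (mstep P U).
Proof.
rewrite /merge_step; case: ifP => // _ hI W1 W2 x.
rewrite !inE => /orP[/andP[i1 n1]|/eqP->] /orP[/andP[i2 n2]|/eqP->] //.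
- exact: hI i1 i2.
- move=> x1 /bigcupP[W /andP[hW cW] xW]; have := hI _ _ _ i1 hW x1 xW => eq.
  by rewrite eq cW in n1.
- move=> /bigcupP[W /andP[hW cW] xW] x1; have := hI _ _ _ i2 hW x1 xW => eq.
  by rewrite eq cW in n2.
Qed.

Lemma merge_sub P U : Sub P (mstep P U).
Proof.
rewrite /merge_step; case: ifP => _ W hW; last by exists W.
case cW: (cps U W).
  exists (\bigcup_(W0 in P | cps U W0) W0); first by rewrite !inE eqxx orbT.
  by apply: bigcup_sup; rewrite hW.
by exists W => //; rewrite !inE cW hW.
Qed.

Lemma merge_join P U W1 W2 : W1 \in P -> W2 \in P -> cps U W1 -> cps U W2 ->
  exists2 W', W' \in mstep P U & (W1 \subset W') && (W2 \subset W').
Proof.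
move=> h1 h2 c1 c2; rewrite /merge_step.
have -> : [exists W in P, cps U W] by apply/existsP; exists W1; rewrite h1.
exists (\bigcup_(W0 in P | cps U W0) W0); first by rewrite !inE eqxx orbT.
by rewrite !bigcup_sup ?h1 ?h2.
Qed.

Lemma fold_inv P l : Inv P -> Inv (foldl mstep P l).
Proof. elim: l P => //= U l IH P h; apply: IH; exact: merge_inv. Qed.

Lemma fold_sub P l : Sub P (foldl mstep P l).
Proof.
elim: l P => /= [|U l IH] P; first by move=> W hW; exists W.
apply: (Sub_trans (merge_sub (P:=P) U)); exact: IH.
Qed.

Lemma fold_join P l U T1 T2 : U \in l ->
  (forall T, T \in comps src tgt OPT -> exists2 W, W \in P & T \subset W) ->
  T1 \in comps src tgt OPT -> T2 \in comps src tgt OPT ->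
  (exists2 d, d \in D & separates U d && (d \subset T1)) ->
  (exists2 d, d \in D & separates U d && (d \subset T2)) ->
  exists2 W, W \in foldl mstep P l & (T1 \subset W) && (T2 \subset W).
Proof.
elim: l P => //= U0 l IH P; rewrite inE => /orP[/eqP<-|Ul] cov h1 h2 e1 e2.
  have [W1 i1 s1] := cov _ h1; have [W2 i2 s2] := cov _ h2.
  have c1 : cps U W1.
    case: e1 => d dD /andP[sd dT]; apply/existsP; exists d; rewrite dD sd /=.
    by apply/existsP; exists T1; rewrite h1 s1 dT.
  have c2 : cps U W2.
    case: e2 => d dD /andP[sd dT]; apply/existsP; exists d; rewrite dD sd /=.
    by apply/existsP; exists T2; rewrite h2 s2 dT.
  have [W' iW' /andP[s1' s2']] := merge_join i1 i2 c1 c2.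
  have [W'' iW'' s''] := fold_sub l iW'.
  exists W'' => //; rewrite (subset_trans s1 (subset_trans s1' s'')).
  by rewrite (subset_trans s2 (subset_trans s2' s'')).
apply: IH => // T hT; have [W i s] := cov T hT; have [W' i' s'] := merge_sub U0 i.
by exists W' => //; exact: subset_trans s s'.
Qed.
End Forest.
Section Run.
Variables (R : realType) (V E : finType) (src tgt : E -> V).
Variables (c : E -> R) (D : {set {set V}}) (eps : R) (r : run V E R).
Hypothesis HD : forall d, d \in D -> #|d| = 2%N.
Hypothesis Hrun : is_run src tgt c D eps r.
Implicit Types (S U : {set V}) (u v w : V).

Local Notation n := (nph r).
Local Notation t := (ts r).
Local Notation F := (Fs r).
Local Notation b := (bs r).
Local Notation y := (ys r).
Local Notation act := (active src tgt D).
Local Notation aat := (active_at src tgt D r).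
Local Notation tau := (deact_time src tgt D r).
Local Notation ac := (act_conn src tgt D r).

Lemma step_ok k : (k < n)%N -> 0 <= t k.+1 - t k.
Proof. by case: Hrun => _ h _ _ /h[]. Qed.

Lemma ts_mono i j : (i <= j <= n)%N -> t i <= t j.
Proof.
case/andP; elim: j => [|j IH]; first by rewrite leqn0 => /eqP->.
rewrite leq_eqVlt => /orP[/eqP->//|]; rewrite ltnS => hij hjn.
apply: le_trans (IH hij (ltnW hjn)) _; rewrite -subr_ge0; exact: step_ok.
Qed.

Lemma F_step k : (k < n)%N -> F k \subset F k.+1.
Proof.
case: Hrun => _ h _ _ /h[_ [_ [_ [_ [[->|[e _ [_ ->]]] _]]]]] //; exact: subsetUr.
Qed.

Lemma F_mono i j : (i <= j <= n)%N -> F i \subset F j.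
Proof.
case/andP; elim: j => [|j IH]; first by rewrite leqn0 => /eqP->.
rewrite leq_eqVlt => /orP[/eqP->//|]; rewrite ltnS => hij hjn.
exact: subset_trans (IH hij (ltnW hjn)) (F_step hjn).
Qed.

Lemma t0 : t 0%N = 0. Proof. by case: Hrun => -[]. Qed.

Lemma ts_ge0 k : (k <= n)%N -> 0 <= t k.
Proof. by move=> h; rewrite -t0; apply: ts_mono. Qed.

Lemma phase_le s1 s2 k1 k2 : phase_at r s1 k1 -> phase_at r s2 k2 -> s1 <= s2 ->
  (k1 <= k2)%N.
Proof.
case=> h1 l1 _ [h2 _ o2] le12; rewrite leqNgt; apply/negP => lt21.
case: o2 => [e2|o2]; first by move: (leq_trans lt21 h1); rewrite e2 ltnn.
have := ts_mono (i:=k2.+1) (j:=k1); rewrite lt21 h1 => /(_ isT) h.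
by move: (lt_le_trans o2 (le_trans h (le_trans l1 le12))); rewrite ltxx.
Qed.

Lemma phase_after s k k' : phase_at r s k' -> (k <= n)%N -> t k <= s -> (k <= k')%N.
Proof.
move=> [h1 l1 o1] kn tk; rewrite leqNgt; apply/negP => lt.
case: o1 => [e|o]; first by move: (leq_trans lt kn); rewrite e ltnn.
have := ts_mono (i:=k'.+1) (j:=k); rewrite lt kn => /(_ isT) h.
by move: (lt_le_trans o (le_trans h tk)); rewrite ltxx.
Qed.

Lemma phase_before s k k' : phase_at r s k' -> (k <= n)%N -> s < t k -> (k' < k)%N.
Proof.
move=> [h1 l1 o1] kn sk; rewrite ltnNge; apply/negP => le.
have := ts_mono (i:=k) (j:=k'); rewrite le h1 => /(_ isT) h.
by move: (lt_le_trans sk (le_trans h l1)); rewrite ltxx.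
Qed.

Lemma phase_ex s : 0 <= s -> exists k, phase_at r s k.
Proof.
move=> s0.
have ex : exists k, (k <= n)%N && (t k <= s) by exists 0%N; rewrite leq0n t0.
have bnd : forall k, (k <= n)%N && (t k <= s) -> (k <= n)%N by move=> k /andP[].
case: (ex_maxnP ex bnd) => k /andP[kn tk] mx.
exists k; split => //.
have [->|kn'] := eqVneq k n; first by left.
right; rewrite ltNge; apply/negP => h.
have : (k.+1 <= n)%N && (t k.+1 <= s) by rewrite h andbT ltn_neqAle kn' kn.
by move/mx; rewrite ltnn.
Qed.

Lemma active_comps Fk (bk : {set V} -> R) S : act Fk bk S -> S \in comps src tgt Fk.
Proof. by case/orP => /andP[] // /andP[]. Qed.

Lemma DA k d a z : d \in D -> a \in d -> z \in d ->
  ~~ connect (adj src tgt (F k)) a z -> act (F k) (b k) (Defs.comp src tgt (F k) a).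
Proof.
move=> dD ad zd nc; apply/orP; left; apply/andP; split; first exact: comp_in_comps.
apply/existsP; exists a; rewrite comp_self /=; apply/existsP; exists z; rewrite nc andbT.
have az : a != z by apply: contraNneq nc => ->; rewrite connect0.
suff -> : [set z; a] = d by [].
apply/eqP; rewrite eqEcard; apply/andP; split.
  by apply/subsetP => x; rewrite !inE => /orP[]/eqP->.
by rewrite HD // cards2 eq_sym az.
Qed.

Definition Aset v : R -> Prop := fun t0 => forall s, 0 <= s -> s < t0 -> aat s v.

Lemma Aset_sup v : classical_sets.has_sup (Aset v).
Proof.
split; first by exists 0 => s s0 s0'; move: (le_lt_trans s0 s0'); rewrite ltxx.
exists (t n) => t1 h; rewrite leNgt; apply/negP => lt.
have [k [ph [S aS _]]] := h (t n) (ts_ge0 (leqnn n)) lt.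
have kn : k = n.
  case: (ph) => kle _ _; apply/eqP; rewrite eqn_leq kle.
  exact: (phase_after ph (leqnn n) (lexx _)).
move: aS; rewrite kn; case: Hrun => _ _ hn _; by rewrite (negbTE (hn S)).
Qed.

Lemma tau_ge v t1 : Aset v t1 -> t1 <= tau v.
Proof. move=> h; exact: (sup_upper_bound (Aset_sup v)). Qed.

Lemma tau_act v s : 0 <= s -> s < tau v -> aat s v.
Proof.
move=> s0 st; have hp : 0 < tau v - s by rewrite subr_gt0.
have := sup_adherent hp (Aset_sup v).
case=> t1 At1; rewrite /deact_time subKr => st1; exact: At1.
Qed.


Lemma aat_conn s k S u v : phase_at r s k -> S \in comps src tgt (F k) -> act (F k) (b k) S ->
  v \in S -> connect (adj src tgt (F k)) u v -> aat s u.
Proof.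
move=> ph hS aS vS cuv; exists k; split => //; exists S => //.
by rewrite (comps_eq hS vS) in_comp conn_sym.
Qed.

Lemma keyK t1 k1 u v : phase_at r t1 k1 -> 0 <= t1 -> t1 <= tau u ->
  connect (adj src tgt (F k1)) u v -> tau v <= tau u.
Proof.
move=> ph1 t10 t1u cuv; apply: ge_sup.
  by exists 0 => s s0 s0'; move: (le_lt_trans s0 s0'); rewrite ltxx.
move=> t' At'; apply: tau_ge => s s0 st'.
have [st1|t1s] := ltP s t1; first by apply: tau_act => //; exact: lt_le_trans st1 t1u.
have [k2 [ph2 [S aS vS]]] := At' s s0 st'.
have k12 := phase_le ph1 ph2 t1s.
have k2n : (k2 <= n)%N by case: ph2.
have hS := active_comps aS.
apply: (aat_conn ph2 hS aS vS); apply: conn_mono cuv; apply: F_mono; by rewrite k12 k2n.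
Qed.

Lemma ac_sym u v : ac u v -> ac v u.
Proof.
case=> t1 [h0 [k [ph [S hS /andP[uS vS]]]] hu hv]; exists t1; split => //.
by exists k; split => //; exists S; rewrite ?uS ?vS.
Qed.

Lemma ac_trans u v w : ac u v -> ac v w -> ac u w.
Proof.
case=> t1 [h1 [k1 [ph1 [S1 hS1 /andP[uS1 vS1]]]] hu1 hv1].
case=> t2 [h2 [k2 [ph2 [S2 hS2 /andP[vS2 wS2]]]] hv2 hw2].
have k1n : (k1 <= n)%N by case: ph1.
have k2n : (k2 <= n)%N by case: ph2.
have [t12|t21] := leP t1 t2.
  have k12 := phase_le ph1 ph2 t12.
  have cuv := comps_conn hS1 uS1 vS1.
  have K := keyK ph1 h1 hu1 cuv.
  have uS2 : u \in S2.
    rewrite (comps_eq hS2 vS2) in_comp conn_sym; apply: conn_mono cuv; apply: F_mono.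
    by rewrite k12 k2n.
  exists t2; split => //; last exact: le_trans hv2 K.
  by exists k2; split => //; exists S2; rewrite ?uS2 ?wS2.
have k21 := phase_le ph2 ph1 (ltW t21).
have cwv : connect (adj src tgt (F k2)) w v by rewrite conn_sym; exact: comps_conn hS2 vS2 wS2.
have K := keyK ph2 h2 hw2 cwv.
have wS1 : w \in S1.
  rewrite (comps_eq hS1 vS1) in_comp conn_sym; apply: conn_mono cwv; apply: F_mono.
  by rewrite k21 k1n.
exists t1; split => //; last exact: le_trans hv1 K.
by exists k1; split => //; exists S1; rewrite ?uS1 ?wS1.
Qed.

Lemma Aset_partner t1 d x z : d \in D -> x \in d -> z \in d ->
  (forall s k, 0 <= s -> s < t1 -> phase_at r s k -> ~~ connect (adj src tgt (F k)) x z) ->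
  Aset x t1.
Proof.
move=> dD xd zd h s s0 st; have [k ph] := phase_ex s0.
have nc := h s k s0 st ph.
exists k; split => //; exists (Defs.comp src tgt (F k) x); last exact: comp_self.
exact: DA dD xd zd nc.
Qed.

Lemma partner_ac d a z : d \in D -> a \in d -> z \in d -> ac a z.
Proof.
move=> dD ad zd.
have ex : exists k, (k <= n)%N && connect (adj src tgt (F k)) a z.
  exists n; rewrite leqnn /=; apply/negPn/negP => nc.
  have := DA dD ad zd nc; case: Hrun => _ _ hn _; by rewrite (negbTE (hn _)).
case: (ex_minnP ex) => k0 /andP[k0n ck0] mn.
have tk0 := ts_ge0 k0n.
have [k ph] := phase_ex tk0.
have k0k := phase_after ph k0n (lexx _).
have kn : (k <= n)%N by case: ph.
have notc : forall s k', 0 <= s -> s < t k0 -> phase_at r s k' ->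
    ~~ connect (adj src tgt (F k')) a z.
  move=> s k' s0 st ph'; apply/negP => c'.
  have := phase_before ph' k0n st => lt.
  have k'n : (k' <= n)%N by case: ph'.
  have := mn k'; rewrite k'n c' => /(_ isT); by rewrite leqNgt lt.
exists (t k0); split => //.
- exists k; split => //; exists (Defs.comp src tgt (F k) a); first exact: comp_in_comps.
  rewrite comp_self in_comp /=; apply: conn_mono ck0; apply: F_mono; by rewrite k0k kn.
- apply: tau_ge; exact: Aset_partner dD ad zd notc.
- apply: tau_ge; apply: (Aset_partner dD zd ad) => s k' s0 st ph'.
  by rewrite conn_sym; exact: notc ph'.
Qed.

Lemma y_pos U k : (k <= n)%N -> 0 < y k U ->
  exists j, [/\ (j < k)%N, act (F j) (b j) U & t j < t j.+1].
Proof.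
elim: k => [|k IH] kn.
  by case: Hrun => -[_ [_ [_ ->]]]; rewrite ltxx.
case: Hrun => _ hstep _ _; have [dt0 [hy _]] := hstep k kn.
rewrite hy; case aU: (act (F k) (b k) U); last first.
  rewrite addr0 => /(IH (ltnW kn))[j [jk aj tj]]; exists j; split => //; exact: ltnW.
have [yp|yn] := ltP 0 (y k U).
  move=> _; have [j [jk aj tj]] := IH (ltnW kn) yp; exists j; split => //; exact: ltnW.
move=> h; exists k; split => //; rewrite -subr_gt0.
by apply: lt_le_trans h _; rewrite -[leRHS]add0r lerD2r.
Qed.

Lemma sep_ac U d d' a a' z z' : 0 < yfin r U ->
  d \in D -> a \in d -> z \in d -> a \in U -> z \notin U ->
  d' \in D -> a' \in d' -> z' \in d' -> a' \in U -> z' \notin U -> ac a a'.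
Proof.
move=> yU dD ad zd aU zU d'D a'd z'd a'U z'U.
have [k [kn aUk tk]] := y_pos (leqnn n) yU.
have hU := active_comps aUk.
have ph : phase_at r (t k) k by split => //; [exact: ltnW | right].
have tk0 := ts_ge0 (ltnW kn).
have notc : forall x x', x \in U -> x' \notin U ->
    forall s k', 0 <= s -> s < t k -> phase_at r s k' ->
    ~~ connect (adj src tgt (F k')) x x'.
  move=> x x' xU x'U s k' s0 st ph'; apply/negP => cx.
  have k'k := phase_le ph' ph (ltW st).
  move: x'U; rewrite (comps_eq hU xU) in_comp; apply/negP/negPn.
  apply: conn_mono cx; apply: F_mono; by rewrite k'k ltnW.
exists (t k); split => //.
- by exists k; split => //; exists U; rewrite ?aU ?a'U.
- apply: tau_ge; exact: Aset_partner dD ad zd (notc _ _ aU zU).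
- apply: tau_ge; exact: Aset_partner d'D a'd z'd (notc _ _ a'U z'U).
Qed.

End Run.

Lemma sep_elems (V : finType) (U d : {set V}) : separates U d ->
  exists a z, [/\ a \in d, a \in U, z \in d & z \notin U].
Proof.
case/andP => /set0Pn[a] /setIP[ad aU] /set0Pn[z] /setDP[zd zU].
by exists a, z.
Qed.

Theorem lemma6p3 (R : realType) (V E : finType) (src tgt : E -> V)
    (c : E -> R) (D : {set {set V}}) (eps : R)
    (OPT : {set E}) (r : run V E R) (rt : {set V} -> V) :
  (forall e, 0 <= c e) ->
  (forall d, d \in D -> #|d| = 2%N) ->
  0 <= eps ->
  minimal_optimal src tgt c D OPT ->
  is_run src tgt c D eps r ->
  root_choice src tgt D r OPT rt ->
  (* S consists of actively connected vertex sets *)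
  (forall S, in_canonical src tgt D r OPT rt S -> act_conn_set src tgt D r S) /\
  (* (i) for every S in S, the tree T_S connects the vertices of S *)
  (forall S T, in_canonical src tgt D r OPT rt S ->
     T \in comps src tgt OPT -> S \subset T ->
     exists X, min_subtree_connecting src tgt OPT T S X /\ connects src tgt X S) /\
  (* (ii) S is agreeable w.r.t. y *)
  agreeable src tgt D OPT (yfin r) (in_canonical src tgt D r OPT rt).
Proof.
move=> c0 HD eps0 [feas _ _] Hrun Hroot.
set FF := forest_family src tgt D OPT (yfin r).
have FFinv : Inv FF.
  apply: fold_inv => W1 W2 x h1 h2 x1 x2; exact: comps_meet h1 h2 x1 x2.
have FFjoin : forall U T1 T2, U \in Usep D (yfin r) ->
    T1 \in comps src tgt OPT -> T2 \in comps src tgt OPT ->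
    (exists2 d, d \in D & separates U d && (d \subset T1)) ->
    (exists2 d, d \in D & separates U d && (d \subset T2)) ->
    exists2 W, W \in FF & (T1 \subset W) && (T2 \subset W).
  move=> U T1 T2 hU h1 h2 e1 e2; apply: (fold_join (U:=U)) => //; first by rewrite mem_enum.
  by move=> T hT; exists T.
split.
  move=> S [W hW [T _ [hS _]]]; exists (rt W) => u /hS[]//.
split.
  move=> S T _ hT sST; exact: subtree_exists.
split.
  move=> S [W hW [T /andP[hT _] [hS _]]]; exists T => //.
  by apply/subsetP => v /hS[].
split.
  move=> S S' T [W1 hW1 [T1 /andP[hT1 sW1] [hS nS]]] [W2 hW2 [T2 /andP[hT2 sW2] [hS' nS']]] hT sT sT'.
  have [x xS] := set0Pn _ nS.
  have [x' xS'] := set0Pn _ nS'.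
  have xT1 : x \in T1 by case: (hS x).1.
  have x'T2 : x' \in T2 by case: (hS' x').1.
  have e1 : T1 = T := comps_meet hT1 hT xT1 (subsetP sT _ xS).
  have e2 : T2 = T := comps_meet hT2 hT x'T2 (subsetP sT' _ xS').
  subst T1 T2.
  have eW : W1 = W2 := FFinv _ _ _ hW1 hW2 (subsetP sW1 _ xT1) (subsetP sW2 _ xT1).
  subst W2.
  apply/setP => v; apply/idP/idP => [/hS h|/hS' h]; [apply/hS'|apply/hS]; exact: h.
have one_dir : forall U d d', 0 < yfin r U -> d \in D -> d' \in D ->
    separates U d -> separates U d' ->
    satisfied (in_canonical src tgt D r OPT rt) d ->
    satisfied (in_canonical src tgt D r OPT rt) d'.
  move=> U d d' yU dD d'D sd sd' [S [W hW [T1 /andP[hT1 sW] [hS nS]]] dS].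
  have [T2 hT2 d'T2] := feas d' d'D.
  have [a [z [ad aU zd zU]]] := sep_elems sd.
  have [a' [z' [a'd a'U z'd z'U]]] := sep_elems sd'.
  have dT1 : d \subset T1 by apply/subsetP => v /(subsetP dS) /hS[].
  have hU : U \in Usep D (yfin r).
    by rewrite inE yU /=; apply/existsP; exists d; rewrite dD sd.
  have [W' hW' /andP[s1 s2]] := FFjoin U T1 T2 hU hT1 hT2
    (ex_intro2 _ _ d dD (introT andP (conj sd dT1)))
    (ex_intro2 _ _ d' d'D (introT andP (conj sd' d'T2))).
  have aT1 : a \in T1 := subsetP dT1 _ ad.
  have eW : W = W' := FFinv _ _ _ hW hW' (subsetP sW _ aT1) (subsetP s1 _ aT1).
  subst W'.
  have ra : act_conn src tgt D r (rt W) a by case: (hS a).1 => //; exact: (subsetP dS).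
  have aa' := sep_ac HD Hrun yU dD ad zd aU zU d'D a'd z'd a'U z'U.
  have rv : forall v, v \in d' -> act_conn src tgt D r (rt W) v.
    move=> v vd'; apply: (ac_trans Hrun ra); apply: (ac_trans Hrun aa').
    exact (partner_ac HD Hrun d'D a'd vd').
  exists [set v in T2 | `[< act_conn src tgt D r (rt W) v >]].
    exists W => //; exists T2; first by rewrite hT2 s2.
    split.
      move=> v; rewrite inE; split; first by case/andP => -> /asboolP.
      by case=> -> h; apply/asboolP.
    apply/set0Pn; exists a'; rewrite inE (subsetP d'T2 _ a'd); exact/asboolP/rv.
  apply/subsetP => v vd'; rewrite inE (subsetP d'T2 _ vd'); exact/asboolP/rv.
move=> U d d' yU dD d'D sd sd'; split; first exact: one_dir sd sd'.
exact: one_dir sd' sd.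
Qed.
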